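(* Let $P$ be an optimal planning problem that has a feasible solution and whose optimal cost $C^*$ is attained. Let $A$ be a well-behaved randomized feasible planner. Consider Asymptotically-optimal$(P,A,n)$: run $A$ on $P_\infty$ to obtain $y_0$ and set $c_0=C(y_0)$; for $i=1,\dots,n$ run $A$ on $P_{c_{i-1}}$ to obtain $y_i$ and set $c_i=C(y_i)$; return $y_n$. Then this procedure is asymptotically optimal: for every $\epsilon>0$, $\Pr\big(C(y_n)-C^*\ge\epsilon\big)\to 0$ as $n\to\infty$, and $C(y_n)\to C^*$ with probability 1.
   Context: A feasible kinodynamic planning problem asks for $S\ge0$, $y:[0,S]\to X$, $u:[0,S]\to U$ with $y(0)=x_I$, $y(S)\in G$, $y(s)\in F$, $u(s)\in B(y(s))$, $y'(s)=D(y(s),u(s))$ for all $s$. An optimal planning problem $P$ also specifies an incremental cost $L$ and terminal cost $\Phi$ and minimizes $C(y)=\int_0^S L(y(s),u(s))ds+\Phi(y(S))$ over feasible solutions, with minimum $C^*$. For $\bar c\in\mathbb{R}\cup\{\infty\}$, $P_{\bar c}$ is the feasible kinodynamic problem (in state-cost space, with augmented state $(x,c)$, start $(x_I,0)$, dynamics $x'=D(x,u)$, $c'=L(x,u)$, goal $\{(x,c):x\in G,\ c+\Phi(x)\le\bar c\}$) whose solutions are exactly the feasible trajectories of $P$ with $C(y)\le\bar c$. A randomized planner $A$, run on $P_{\bar c}$, returns a random solution $y$. $A$ is well-behaved if (1) whenever a feasible solution exists and $\bar c>C^*$, $A$ on $P_{\bar c}$ terminates in finite time; and (2) there is a constant $w>0$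 such that for every cost bound $\bar c$, the returned solution satisfies $E\big[C(y)-C^*\mid\bar c\big]\le(1-w)(\bar c-C^* )$. *)

(* Defs.v *)
From HB Require Import structures.
From mathcomp Require Import all_boot all_order all_algebra.
From mathcomp Require Import all_classical all_reals all_analysis measurable_realfun.
Set Implicit Arguments. Unset Strict Implicit. Unset Printing Implicit Defensive.
Import Order.TTheory GRing.Theory Num.Theory.
Import numFieldNormedType.Exports.
Local Open Scope classical_set_scope.
Local Open Scope ring_scope.

(** An optimal kinodynamic planning problem: state space X, control set U,
    start xI, goal G, free space F, admissible controls B, dynamics D,
    incremental cost L and terminal cost Phi. *)
Record planning_problem (R : realType) (X : normedModType R) (U : Type) := PlanningProblem {
  pp_xI : X;
  pp_G : set X;
  pp_F : set X;
  pp_B : X -> set U;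
  pp_D : X -> U -> X;
  pp_L : X -> U -> R;
  pp_Phi : X -> R }.

Record traj (R : realType) (X : normedModType R) (U : Type) := Traj {
  t_S : R;
  t_y : R -> X;
  t_u : R -> U }.

(** Feasibility: S >= 0, y(0)=xI, y(S) in G, and for all s in [0,S]:
    y(s) in F, u(s) in B(y(s)), and y'(s) = D(y(s),u(s)), where the
    derivative is taken within [0,S] (one-sided at the endpoints). *)
Definition feasible (R : realType) (X : normedModType R) (U : Type)
  (P : planning_problem X U) (t : traj X U) : Prop :=
  [/\ 0 <= t_S t, t_y t 0 = pp_xI P, pp_G P (t_y t (t_S t)) &
   forall s, s \in `[0, t_S t] ->
     [/\ pp_F P (t_y t s), pp_B P (t_y t s) (t_u t s) &
      (fun h : R => h^-1 *: (t_y t (s + h) - t_y t s))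
        @ within [set h : R | 0 <= s + h <= t_S t] (nbhs (0 : R)^')
        --> pp_D P (t_y t s) (t_u t s)]].

Definition cost (R : realType) (X : normedModType R) (U : Type)
  (P : planning_problem X U) (t : traj X U) : R :=
  Rintegral (@lebesgue_measure R) `[0, t_S t] (fun s => pp_L P (t_y t s) (t_u t s))
  + pp_Phi P (t_y t (t_S t)).

Definition optimal_cost_attained (R : realType) (X : normedModType R) (U : Type)
  (P : planning_problem X U) (Cstar : R) : Prop :=
  (exists t, feasible P t /\ cost P t = Cstar) /\
  (forall t, feasible P t -> Cstar <= cost P t).

Definition solves_bounded (R : realType) (X : normedModType R) (U : Type)
  (P : planning_problem X U) (cbar : \bar R) (t : traj X U) : Prop :=
  feasible P t /\ ((cost P t)%:E <= cbar)%E.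

(** A randomized planner is modelled as a map A : \bar R -> Sd -> traj,
    where Sd is a space of random seeds distributed according to the
    probability mu: A cbar s is the solution returned on P_cbar with seed s.
    It is well-behaved with constant w if
    (1) whenever cbar >= Cstar (so P_cbar has a solution), A returns a solution
        of P_cbar (termination);
    (2) for every finite cbar >= Cstar, E[C(y) - Cstar | cbar] <= (1-w)(cbar - Cstar)
        (for cbar = +oo the right-hand side is +oo). *)
Definition well_behaved (R : realType) (X : normedModType R) (U : Type)
  (P : planning_problem X U) (Cstar : R)
  (d : measure_display) (Sd : measurableType d) (mu : probability Sd R)
  (A : \bar R -> Sd -> traj X U) (w : R) : Prop :=
  [/\ 0 < w,
      (forall cbar : \bar R, (Cstar%:E <= cbar)%E -> forall s, solves_bounded P cbar (A cbar s)) &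
      (forall cbar : R, Cstar <= cbar ->
         (\int[mu]_s ((cost P (A cbar%:E s) - Cstar)%:E) <= ((1 - w) * (cbar - Cstar))%:E)%E)].

Definition iid_seeds (R : realType) (d : measure_display) (Omega : measurableType d)
  (Pr : probability Omega R) (d' : measure_display) (Sd : measurableType d')
  (mu : probability Sd R) (omega : nat -> Omega -> Sd) : Prop :=
  (forall n, measurable_fun setT (omega n)) /\
  forall (I : seq nat) (Bs : nat -> set Sd), uniq I -> (forall i, measurable (Bs i)) ->
    Pr (\bigcap_(i in [set` I]) (omega i @^-1` Bs i)) = (\prod_(i <- I) mu (Bs i))%E.

Fixpoint asymp_opt (R : realType) (X : normedModType R) (U : Type)
  (P : planning_problem X U) (T Sd : Type) (A : \bar R -> Sd -> traj X U)
  (omega : nat -> T -> Sd) (n : nat) (x : T) : traj X U :=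
  match n with
  | 0 => A +oo%E (omega 0%N x)
  | n'.+1 => A (cost P (asymp_opt P A omega n' x))%:E (omega n x)
  end.

(* Main.v *)
Require Import Defs.
From HB Require Import structures.
From mathcomp Require Import all_boot all_order all_algebra.
From mathcomp Require Import all_classical all_reals all_analysis measurable_realfun.
From mathcomp Require Import lra.
Import Order.TTheory GRing.Theory Num.Theory.
Import numFieldNormedType.Exports.
Local Open Scope classical_set_scope.
Local Open Scope ring_scope.
Section proof.
Variables (R : realType) (X : normedModType R) (U : Type)
  (P : planning_problem X U) (Cstar : R)
  (d : measure_display) (Sd : measurableType d) (mu : probability Sd R)
  (A : \bar R -> Sd -> traj X U) (w : R)
  (dO : measure_display) (Omega : measurableType dO) (Pr : probability Omega R)
  (omega : nat -> Omega -> Sd).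
Hypothesis Hopt : optimal_cost_attained P Cstar.
Hypothesis Hwb : well_behaved P Cstar mu A w.
Hypothesis Hmf : measurable_fun setT (fun p : \bar R * Sd => cost P (A p.1 p.2)).
Hypothesis Hiid : iid_seeds Pr mu omega.

Definition gg (p : R * Sd) : R := cost P (A (Num.max p.1 Cstar)%:E p.2).

Fixpoint cc (M : R) (n : nat) (x : Omega) : R :=
  match n with
  | 0 => Num.min (cost P (A +oo%E (omega 0 x))) (Cstar + M)
  | n'.+1 => gg (cc M n' x, omega n x)
  end.

Lemma feas_ge t : feasible P t -> Cstar <= cost P t.
Proof. by case: Hopt => _; apply. Qed.

Lemma sol_ok s c : (Cstar%:E <= c)%E -> feasible P (A c s) /\ ((cost P (A c s))%:E <= c)%E.
Proof. by case: Hwb => _ H _ /H /(_ s) []. Qed.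
Arguments sol_ok s {c}.

Lemma gg_ge p : Cstar <= gg p.
Proof. apply: feas_ge; case: (sol_ok p.2 (_ : (Cstar%:E <= (Num.max p.1 Cstar)%:E)%E)) => //.
by rewrite lee_fin le_max lexx orbT. Qed.

Lemma asymp_feas n x : feasible P (asymp_opt P A omega n x).
Proof.
elim: n => [|n IH] /=; first by case: (sol_ok (omega 0 x) (leey _)).
have H : (Cstar%:E <= (cost P (asymp_opt P A omega n x))%:E)%E by rewrite lee_fin feas_ge.
by case: (sol_ok (omega n.+1 x) H).
Qed.

Lemma asymp_dec n x : cost P (asymp_opt P A omega n.+1 x) <= cost P (asymp_opt P A omega n x).
Proof.
have H : (Cstar%:E <= (cost P (asymp_opt P A omega n x))%:E)%E by rewrite lee_fin; apply: feas_ge; apply: asymp_feas.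
by case: (sol_ok (omega n.+1 x) H); rewrite lee_fin.
Qed.

Lemma cc_ge M n x : 0 <= M -> Cstar <= cc M n x.
Proof.
move=> M0; case: n => [|n] /=; last exact: gg_ge.
rewrite le_min; apply/andP; split.
  by apply: feas_ge; case: (sol_ok (omega 0 x) (leey _)).
by rewrite lerDl.
Qed.

Lemma cc0_le M x : cc M 0 x <= Cstar + M.
Proof. by rewrite /= ge_min lexx orbT. Qed.

Lemma cc_eq M x : 0 <= M -> cost P (asymp_opt P A omega 0 x) <= Cstar + M ->
  forall n, cc M n x = cost P (asymp_opt P A omega n x).
Proof.
move=> M0 H; elim => [|n IH] /=; first by rewrite min_l.
rewrite /gg /= max_l; first by rewrite IH.
by rewrite IH; apply: feas_ge; apply: asymp_feas.
Qed.

Lemma mgg : measurable_fun setT gg.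
Proof.
have -> : gg = (fun p : \bar R * Sd => cost P (A p.1 p.2)) \o
   (fun p : R * Sd => ((Num.max p.1 Cstar)%:E, p.2)) by [].
apply: measurableT_comp; first exact: Hmf.
apply: measurable_fun_pair.
  apply/measurable_EFinP.
  apply: measurable_maxr; first exact: measurable_fst.
  exact: measurable_cst.
exact: measurable_snd.
Qed.

Lemma mphi0 M : measurable_fun setT (fun s => Num.min (cost P (A +oo%E s)) (Cstar + M)).
Proof.
apply: measurable_minr; last exact: measurable_cst.
have -> : (fun s => cost P (A +oo%E s)) = (fun p : \bar R * Sd => cost P (A p.1 p.2)) \o
   (fun s : Sd => (+oo%E, s)) by [].
apply: measurableT_comp; first exact: Hmf.
apply: measurable_fun_pair; first exact: measurable_cst.
exact: measurable_id.
Qed.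

Lemma mcc M n : measurable_fun setT (cc M n).
Proof.
case: Hiid => mom _.
elim: n => [|n IH].
  have -> : cc M 0 = (fun s => Num.min (cost P (A +oo%E s)) (Cstar + M)) \o omega 0 by [].
  apply: measurableT_comp; [exact: mphi0 | exact: mom].
have -> : cc M n.+1 = gg \o (fun x => (cc M n x, omega n.+1 x)) by [].
apply: measurableT_comp; first exact: mgg.
exact: measurable_fun_pair.
Qed.

Definition indep_at M n := forall (B : set R) (Bs : nat -> set Sd) (J : seq nat),
  measurable B -> (forall i, measurable (Bs i)) -> uniq J -> all (fun j => n < j)%N J ->
  Pr ((cc M n @^-1` B) `&` \bigcap_(i in [set` J]) (omega i @^-1` Bs i)) =
  (Pr (cc M n @^-1` B) * \prod_(i <- J) mu (Bs i))%E.

Lemma preim_meas d1 d2 (T1 : measurableType d1) (T2 : measurableType d2) (f : T1 -> T2) B :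
  measurable_fun setT f -> measurable B -> measurable (f @^-1` B).
Proof. by move=> mf mB; rewrite -[X in measurable X]setTI; apply: mf. Qed.

Lemma indep0 M : indep_at M 0.
Proof.
move=> B Bs J mB mBs uJ aJ.
case: Hiid => mom Hi.
set phi := (fun s => Num.min (cost P (A +oo%E s)) (Cstar + M)).
have mphiB : measurable (phi @^-1` B) by apply: preim_meas => //; exact: mphi0.
pose Bs' i := if i == 0%N then phi @^-1` B else Bs i.
have mBs' : forall i, measurable (Bs' i) by move=> i; rewrite /Bs'; case: ifP.
have J0 : 0%N \notin J.
  apply/negP => /(allP aJ) //.
have e1 := Hi (0%N :: J) Bs' (_ : uniq (0%N :: J)) mBs'.
rewrite /= J0 uJ in e1; have {}e1 := e1 isT.
have e2 := Hi [:: 0%N] Bs' isT mBs'.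
have E1 : \bigcap_(i in [set` 0%N :: J]) (omega i @^-1` Bs' i) =
   (cc M 0 @^-1` B) `&` \bigcap_(i in [set` J]) (omega i @^-1` Bs i).
  apply/seteqP; split => x /=.
    move=> H; split; first by have := H 0%N; rewrite /= inE eqxx /Bs' /=; apply.
    move=> i Ji; have := H i; rewrite /= inE Ji orbT /Bs'.
    have -> : (i == 0%N) = false by apply/negP => /eqP ?; subst i; rewrite Ji in J0.
    by apply.
  move=> [H1 H2] i; rewrite /= inE => /orP [/eqP ->|Ji]; first by rewrite /Bs' /=.
  have -> : Bs' i = Bs i.
    rewrite /Bs'; case: ifP => // /eqP ?; subst i; by rewrite Ji in J0.
  exact: H2.
have E2 : \bigcap_(i in [set` [:: 0%N]]) (omega i @^-1` Bs' i) = cc M 0 @^-1` B.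
  apply/seteqP; split => x /=.
    by move=> H; have := H 0%N; rewrite /= inE eqxx /Bs' /=; apply.
  by move=> H i; rewrite /= inE => /eqP ->; rewrite /Bs' /=.
rewrite -E1 e1 -E2 e2 big_cons big_seq1 /Bs' eqxx.
congr (_ * _)%E.
rewrite big_seq_cond [RHS]big_seq_cond; apply: eq_bigr => i /andP [Ji _].
case: ifP => // /eqP ?; subst i; by rewrite Ji in J0.
Qed.

Lemma aux_sub (p q : \bar R) : p \is a fin_num -> q \is a fin_num ->
  (p - q * p = (1 - q) * p)%E.
Proof.
move: p q => [p| |] [q| |] // _ _.
by rewrite -EFinM -EFinB -EFinB -EFinM mulrBl mul1r.
Qed.

Lemma indepS M n : indep_at M n -> indep_at M n.+1.
Proof.
move=> IH B Bs J mB mBs uJ aJ.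
case: Hiid => mom Hi.
set K := \bigcap_(i in [set` J]) (omega i @^-1` Bs i).
set Pi := (\prod_(i <- J) mu (Bs i))%E.
have mK : measurable K by apply: bigcap_measurableType => i _; apply: preim_meas.
pose Psi x := (cc M n x, omega n.+1 x).
have mPsi : measurable_fun setT Psi by apply: measurable_fun_pair; [exact: mcc|exact: mom].
have aJ' : all (fun j => n < j)%N J by apply/allP => i /(allP aJ) /ltnW.
have Jn : n.+1 \notin J by apply/negP => /(allP aJ); rewrite ltnn.
have PK : Pr K = Pi.
  have := IH setT Bs J measurableT mBs uJ aJ'.
  by rewrite preimage_setT setTI probability_setT mul1e.
have Pifin : Pi \is a fin_num by rewrite -PK fin_num_measure.
have claim : forall S, <<s [set A1 `*` A2 | A1 in measurable & A2 in measurable] >> S ->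
    Pr ((Psi @^-1` S) `&` K) = (Pr (Psi @^-1` S) * Pi)%E.
  apply: dynkin_induction.
  - exact: measurable_prod_measurableType.
  - move=> Z1 Z2 [X1 mX1 [X2 mX2 <-{Z1}]] [Y1 mY1 [Y2 mY2 <-{Z2}]].
    exists (X1 `&` Y1); first exact: measurableI.
    by exists (X2 `&` Y2); [exact: measurableI|rewrite setXI].
  - by rewrite preimage_setT setTI probability_setT mul1e.
  - move=> _ [A1 mA1 [A2 mA2 <-]].
    pose Bs' i := if i == n.+1 then A2 else Bs i.
    have mBs' : forall i, measurable (Bs' i) by move=> i; rewrite /Bs'; case: ifP.
    have e1 := IH A1 Bs' (n.+1 :: J) mA1 mBs'.
    rewrite /= Jn uJ ltnSn aJ' in e1; have {}e1 := e1 isT isT.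
    have e2 := IH A1 Bs' [:: n.+1] mA1 mBs' isT.
    rewrite /= ltnSn in e2; have {}e2 := e2 isT.
    have E1 : (cc M n @^-1` A1) `&` \bigcap_(i in [set` n.+1 :: J]) (omega i @^-1` Bs' i) =
        (Psi @^-1` (A1 `*` A2)) `&` K.
      apply/seteqP; split => x /=.
        move=> [H0 H]; split; first split => //.
          by have := H n.+1; rewrite /= inE eqxx /Bs' eqxx; apply.
        move=> i Ji; have := H i; rewrite /= inE Ji orbT /Bs'.
        have -> : (i == n.+1) = false by apply/negP => /eqP ?; subst i; rewrite Ji in Jn.
        by apply.
      move=> [[H1 H2] H3]; split => // i; rewrite /= inE => /orP [/eqP ->|Ji].
        by rewrite /Bs' eqxx.
      have -> : Bs' i = Bs i.
        by rewrite /Bs'; case: ifP => // /eqP ?; subst i; rewrite Ji in Jn.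
      exact: H3.
    have E2 : (cc M n @^-1` A1) `&` \bigcap_(i in [set` [:: n.+1]]) (omega i @^-1` Bs' i) =
        Psi @^-1` (A1 `*` A2).
      apply/seteqP; split => x /=.
        by move=> [H0 H]; split => //; have := H n.+1; rewrite /= inE eqxx /Bs' eqxx; apply.
      by move=> [H1 H2]; split => // i; rewrite /= inE => /eqP ->; rewrite /Bs' eqxx.
    rewrite -E1 e1 -E2 e2 big_cons big_seq1 /Bs' eqxx -muleA.
    congr (_ * (_ * _))%E.
    rewrite big_seq_cond [RHS]big_seq_cond; apply: eq_bigr => i /andP [Ji _].
    by case: ifP => // /eqP ?; subst i; rewrite Ji in Jn.
  - move=> S mS HS.
    have mPS : measurable (Psi @^-1` S) by apply: preim_meas.
    rewrite -preimage_setC probability_setC //.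
    rewrite setIC -setDE measureD //; last by rewrite -ge0_fin_numE ?measure_ge0 ?fin_num_measure.
    transitivity (Pr K - Pr (Psi @^-1` S `&` K))%E; first by rewrite setIC.
    by rewrite HS PK aux_sub // fin_num_measure.
  - move=> F mF tF HF.
    have mPF : forall k, measurable (Psi @^-1` F k) by move=> k; apply: preim_meas.
    rewrite preimage_bigcup setI_bigcupl.
    rewrite measure_bigcup //; last first.
      apply/trivIsetP => i j _ _ ij.
      move/trivIsetP : tF => /(_ i j Logic.I Logic.I ij) H.
      apply/seteqP; split => // x /= [[a _] [b _]].
      by suff : (F i `&` F j) (Psi x) by rewrite H.
      by move=> i _; apply: measurableI.
    rewrite measure_bigcup //; last first.
      apply/trivIsetP => i j _ _ ij.
      move/trivIsetP : tF => /(_ i j Logic.I Logic.I ij) H.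
      apply/seteqP; split => // x /= [a b].
      by suff : (F i `&` F j) (Psi x) by rewrite H.
    transitivity (\sum_(i <oo | i \in setT) (Pr (Psi @^-1` F i) * Pi))%E.
      by apply: eq_eseriesr => i _; apply: HF.
    rewrite -(fineK Pifin) [RHS]muleC -nneseriesZl; last by move=> i _; apply: measure_ge0.
    by apply: eq_eseriesr => i _; rewrite muleC.
have -> : cc M n.+1 @^-1` B = Psi @^-1` (gg @^-1` B) by [].
apply: claim.
rewrite -measurable_prod_measurableType.
exact: preim_meas mgg mB.
Qed.

Lemma indep_all M n : indep_at M n.
Proof. elim: n => [|n IH]; [exact: indep0 | exact: indepS]. Qed.

Lemma w_le1 : w <= 1.
Proof.
case: Hwb => _ Hs Hi.
have := Hi (Cstar + 1) (_ : Cstar <= Cstar + 1); rewrite lerDl ler01 => /(_ isT).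
rewrite addrAC subrr add0r mulr1 => H.
rewrite -subr_ge0 -lee_fin (le_trans _ H) //.
apply: integral_ge0 => s _; rewrite lee_fin subr_ge0.
apply: feas_ge; case: (sol_ok s (_ : (Cstar%:E <= (Cstar + 1)%:E)%E)) => //.
by rewrite lee_fin lerDl.
Qed.

Definition ccm M n : {mfun Omega >-> R} :=
  HB.pack (cc M n) (isMeasurableFun.Build _ _ _ _ _ (mcc M n)).

Lemma Estep M n : 0 <= M ->
  (\int[Pr]_x ((cc M n.+1 x - Cstar)%:E) <=
   (1 - w)%:E * \int[Pr]_x ((cc M n x - Cstar)%:E))%E.
Proof.
move=> M0.
case: (Hiid) => mom _.
pose Psi x := (cc M n x, omega n.+1 x).
have mPsi : measurable_fun setT Psi by apply: measurable_fun_pair; [exact: mcc|exact: mom].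
pose Psim : {mfun Omega >-> (R * Sd)%type} := HB.pack Psi (isMeasurableFun.Build _ _ _ _ _ mPsi).
pose law := distribution Pr (ccm M n).
pose m' := distribution Pr Psim.
have Hrect : forall A1 A2, measurable A1 -> measurable A2 ->
    m' (A1 `*` A2) = (law A1 * mu A2)%E.
  move=> A1 A2 mA1 mA2.
  have := indep_all M n A1 (fun _ => A2) [:: n.+1] mA1 (fun _ => mA2) isT.
  rewrite /= ltnSn big_seq1 => /(_ isT) <-.
  rewrite /m' /distribution /pushforward /=; congr (Pr _).
  apply/seteqP; split => x /=.
    by move=> [H1 H2]; split => // i; rewrite /= inE => /eqP ->.
  by move=> [H1 H2]; split => //; apply: H2; rewrite /= inE.
have Hprod := product_measure_unique Hrect.
have gg0 : forall p, (0 <= (gg p - Cstar)%:E)%E by move=> p; rewrite lee_fin subr_ge0 gg_ge.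
have mgg' : measurable_fun setT (fun p => (gg p - Cstar)%:E).
  apply/measurable_EFinP; apply: measurable_funB => //; exact: mgg.
have E1 : (\int[Pr]_x ((cc M n.+1 x - Cstar)%:E) = \int[m']_p ((gg p - Cstar)%:E))%E.
  rewrite /m' /distribution ge0_integral_pushforward //.
have w1 := w_le1.
have E3 := fubini_tonelli1 (m1 := law) (m2 := mu) _ mgg' gg0.
have E2 : (\int[m']_p ((gg p - Cstar)%:E) = \int[law]_c (fubini_F mu (fun p => (gg p - Cstar)%:E) c))%E.
  rewrite -E3.
  apply: eq_measure_integral => B mB _.
  exact/esym/Hprod.
pose g2 c := ((1 - w) * (Num.max c Cstar - Cstar))%:E.
have mg2 : measurable_fun setT g2.
  apply/measurable_EFinP; apply: measurable_funM; first exact: measurable_cst.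
  apply: measurable_funB; last exact: measurable_cst.
  apply: measurable_maxr; [exact: measurable_id | exact: measurable_cst].
have E4 : (\int[law]_c (fubini_F mu (fun p => (gg p - Cstar)%:E) c) <= \int[law]_c g2 c)%E.
  apply: ge0_le_integral.
  - exact: measurableT.
  - move=> c _; apply: integral_ge0 => s _; exact: gg0.
  - exact: measurable_fun_fubini_tonelli_F.
  - exact: mg2.
  - move=> c _.
    case: Hwb => _ _ Hi.
    have := Hi (Num.max c Cstar) (_ : Cstar <= Num.max c Cstar).
    rewrite le_max lexx orbT => /(_ isT) H.
    exact: H.
have g20 : forall c, (0 <= g2 c)%E.
  move=> c; rewrite /g2 lee_fin mulr_ge0 //; first by rewrite subr_ge0.
  by rewrite subr_ge0 le_max lexx orbT.
have E5 : (\int[law]_c g2 c = \int[Pr]_x ((1 - w)%:E * (cc M n x - Cstar)%:E))%E.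
  rewrite /law /distribution ge0_integral_pushforward; last 3 first.
  - exact: measurableT.
  - exact: mg2.
  - by move=> c _; apply: g20.
  apply: eq_integral => x _; rewrite /g2 /= -EFinM max_l //.
  exact: cc_ge.
  exact: (mcc M n).
rewrite E1 E2 -ge0_integralZl_EFin; last first.
- by rewrite subr_ge0.
- apply/measurable_EFinP; apply: measurable_funB; [exact: mcc | exact: measurable_cst].
- by move=> x _; rewrite lee_fin subr_ge0; exact: cc_ge.
- exact: measurableT.
by rewrite -E5.

Qed.


Definition cn n x := cost P (asymp_opt P A omega n x).

Lemma mcn n : measurable_fun setT (cn n).
Proof.
case: Hiid => mom _.
elim: n => [|n IH].
  have -> : cn 0 = (fun p : \bar R * Sd => cost P (A p.1 p.2)) \o
     (fun x => (+oo%E, omega 0%N x)) by [].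
  apply: measurableT_comp; first exact: Hmf.
  apply: measurable_fun_pair; [exact: measurable_cst | exact: mom].
have -> : cn n.+1 = (fun p : \bar R * Sd => cost P (A p.1 p.2)) \o
     (fun x => ((cn n x)%:E, omega n.+1 x)) by [].
apply: measurableT_comp; first exact: Hmf.
apply: measurable_fun_pair; [exact/measurable_EFinP | exact: mom].
Qed.

Lemma Ebound M n : 0 <= M ->
  (\int[Pr]_x ((cc M n x - Cstar)%:E) <= ((1 - w) ^+ n * M)%:E)%E.
Proof.
move=> M0; elim: n => [|n IH].
  rewrite expr0 mul1r.
  apply: (@le_trans _ _ (\int[Pr]_x (cst M%:E) x)%E).
    apply: ge0_le_integral.
    - exact: measurableT.
    - by move=> x _; rewrite lee_fin subr_ge0; apply: cc_ge.
    - apply/measurable_EFinP; apply: measurable_funB; [exact: mcc | exact: measurable_cst].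
    - exact: measurable_cst.
    - by move=> x _; rewrite lee_fin lerBlDl cc0_le.
  rewrite integral_cst // [X in (_ * X)%E](_ : _ = 1%E) ?mule1 //; exact: probability_setT.
apply: (le_trans (Estep M n M0)).
rewrite exprS -mulrA EFinM.
apply: lee_wpmul2l => //.
by rewrite lee_fin subr_ge0 w_le1.
Qed.

Lemma markov' (f : Omega -> R) eps : measurable_fun setT f -> (forall x, 0 <= f x) -> 0 < eps ->
  (eps%:E * Pr [set x | (eps <= f x)%R] <= \int[Pr]_x (f x)%:E)%E.
Proof.
move=> mf f0 e0.
have mS : measurable [set x | eps <= f x].
  have -> : [set x | eps <= f x] = f @^-1` `[eps, +oo[%classic.
    by apply/seteqP; split => x /=; rewrite in_itv /= andbT.
  apply: preim_meas => //; exact: measurable_itv.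
rewrite -[X in (_ * Pr X)%E]setIT -integral_indic // -ge0_integralZl_EFin; last 4 first.
- exact: measurableT.
- by move=> x _; rewrite lee_fin.
- by apply/measurable_EFinP; apply: measurable_indic.
- exact: ltW.
apply: ge0_le_integral.
- exact: measurableT.
- by move=> x _; rewrite lee_fin mulr_ge0 // ltW.
- by apply/measurable_EFinP; apply: measurable_funM; [exact: measurable_cst | apply: measurable_indic].
- by apply/measurable_EFinP.
- move=> x _; rewrite lee_fin indicE; case: (boolP (x \in _)).
    by rewrite inE /= mulr1.
  by rewrite mulr0.
Qed.

Lemma meas_ge (f : Omega -> R) a : measurable_fun setT f -> measurable [set x | (a <= f x)%R].
Proof.
move=> mf; have -> : [set x | (a <= f x)%R] = f @^-1` `[a, +oo[%classic.
  by apply/seteqP; split => x /=; rewrite in_itv /= andbT.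
apply: preim_meas => //; exact: measurable_itv.
Qed.

Lemma meas_gt (f : Omega -> R) a : measurable_fun setT f -> measurable [set x | (a < f x)%R].
Proof.
move=> mf; have -> : [set x | (a < f x)%R] = f @^-1` `]a, +oo[%classic.
  by apply/seteqP; split => x /=; rewrite in_itv /= andbT.
apply: preim_meas => //; exact: measurable_itv.
Qed.

Lemma key eps M n : 0 < eps -> 0 <= M ->
  (Pr [set x | (eps <= cn n x - Cstar)%R] <=
   Pr [set x | (Cstar + M < cn 0 x)%R] + ((1 - w) ^+ n * M / eps)%:E)%E.
Proof.
move=> e0 M0.
have mcnB : forall k, measurable_fun setT (fun x => cn k x - Cstar).
  move=> k; apply: measurable_funB; [exact: mcn | exact: measurable_cst].
have mccB : measurable_fun setT (fun x => cc M n x - Cstar).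
  apply: measurable_funB; [exact: mcc | exact: measurable_cst].
have mS := meas_ge _ eps (mcnB n).
have mT0 := meas_gt _ (Cstar + M) (mcn 0).
have mT1 := meas_ge _ eps mccB.
have sub : [set x | (eps <= cn n x - Cstar)%R] `<=`
    [set x | (Cstar + M < cn 0 x)%R] `|` [set x | (eps <= cc M n x - Cstar)%R].
  move=> x /= H; case: (ltP (Cstar + M) (cn 0 x)) => h; first by left.
  by right; rewrite (cc_eq M x M0 h n).
apply: (le_trans (le_measure _ _ _ sub)); rewrite ?inE //; first exact: measurableU.
apply: (le_trans (measureU2 _ mT0 mT1)).
apply: leeD2l.
have f0 : forall x, (0 <= cc M n x - Cstar)%R by move=> x; rewrite subr_ge0 cc_ge.
have H2 := le_trans (@markov' _ eps mccB f0 e0) (Ebound M n M0).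
have fin : Pr [set x | (eps <= cc M n x - Cstar)%R] \is a fin_num by apply: fin_num_measure.
move: H2; rewrite -(fineK fin) -EFinM !lee_fin => H2.
apply: (@le_trans _ _ (fine (Pr [set x | (eps <= cc M n x - Cstar)%R]))%:E).
  by rewrite fineK.
by rewrite lee_fin ler_pdivlMr // mulrC.
Qed.

Lemma q_cvg c : (fun n => ((1 - w) ^+ n * c)%:E) @ \oo --> 0%E.
Proof.
apply/fine_cvgP; split; first by near=> n.
rewrite (_ : 0 = 0 * c); last by rewrite mul0r.
apply: cvgMr_tmp; apply: cvg_expr.
have w0 : 0 < w by case: Hwb.
rewrite ger0_norm ?subr_ge0 ?w_le1 //.
by rewrite ltrBlDr ltrDl.
Unshelve. all: by end_near.
Qed.

Lemma cap_null eps : 0 < eps ->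
  Pr (\bigcap_n [set x | (eps <= cn n x - Cstar)%R]) = 0%E.
Proof.
move=> e0.
have mcnB : forall k, measurable_fun setT (fun x => cn k x - Cstar).
  move=> k; apply: measurable_funB; [exact: mcn | exact: measurable_cst].
set a := Pr _.
pose T k := [set x | (Cstar + k%:R < cn 0 x)%R].
have mT : forall k, measurable (T k) by move=> k; apply: meas_gt; exact: mcn.
have step1 : forall k : nat, (a <= Pr (T k))%E.
  move=> k.
  have cv : (fun n => Pr (T k) + ((1 - w) ^+ n * (k%:R / eps))%:E)%E @ \oo --> Pr (T k).
    rewrite -[X in _ --> X]adde0.
    apply: cvgeD; first by rewrite fin_num_adde_defl // fin_num_measure.
      exact: cvg_cst.
    exact: q_cvg.
  rewrite -(cvg_lim _ cv) //.
  apply: lime_ge; first by apply/cvg_ex; eexists; exact: cv.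
  near=> n.
  apply: (le_trans _ (_ : Pr [set x | (eps <= cn n x - Cstar)%R] <= _)%E).
    apply: le_measure; rewrite ?inE.
    - by apply: bigcap_measurableType => i _; apply: meas_ge.
    - by apply: meas_ge.
    - by move=> x /(_ n Logic.I).
  rewrite mulrA.
  exact: key.
have cvT : Pr \o T @ \oo --> Pr (\bigcap_k T k).
  apply: nonincreasing_cvg_mu.
  - by rewrite -ge0_fin_numE ?measure_ge0 ?fin_num_measure.
  - exact: mT.
  - by apply: bigcap_measurableType.
  - move=> m n mn; apply/subsetPset => x /=.
    by apply: le_lt_trans; rewrite lerD2l ler_nat.
have T0 : \bigcap_k T k = set0.
  apply/seteqP; split => // x /= H.
  have [k Hk] : exists k : nat, cn 0 x - Cstar < k%:R.
    exists (Num.trunc (`|cn 0 x - Cstar|)).+1.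
    apply: (le_lt_trans (ler_norm _)); exact: truncnS_gt.
  have := H k Logic.I => /= h.
  rewrite ltrBlDl in Hk.
  by move: (lt_trans h Hk); rewrite ltxx.
rewrite T0 measure0 in cvT.
apply/eqP; rewrite eq_le measure_ge0 andbT.
rewrite -(cvg_lim _ cvT) //.
apply: lime_ge; first by apply/cvg_ex; eexists; exact: cvT.
by near=> k; apply: step1.
Unshelve. all: by end_near.
Qed.

Lemma cn_dec m n x : (m <= n)%N -> cn n x <= cn m x.
Proof.
elim: n => [|n IH]; first by rewrite leqn0 => /eqP ->.
rewrite leq_eqVlt => /orP [/eqP ->//|]; rewrite ltnS => /IH.
exact: le_trans (asymp_dec n x).
Qed.

Lemma cn_ge n x : Cstar <= cn n x.
Proof. apply: feas_ge; exact: asymp_feas. Qed.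

Lemma main :
  (forall eps : R, 0 < eps ->
     (fun n => Pr [set x | eps <= cost P (asymp_opt P A omega n x) - Cstar])
       @ \oo --> 0%E) /\
  {ae Pr, forall x, (fun n => cost P (asymp_opt P A omega n x)) @ \oo --> Cstar}.
Proof.
have mS : forall eps n, measurable [set x | eps <= cn n x - Cstar].
  move=> eps n; apply: meas_ge; apply: measurable_funB; [exact: mcn | exact: measurable_cst].
have Sdec : forall eps, nonincreasing_seq (fun n => [set x | eps <= cn n x - Cstar]).
  move=> eps m n mn; apply/subsetPset => x /= H.
  apply: (le_trans H); rewrite lerD2r; exact: cn_dec.
split.
  move=> eps e0.
  have cv : (Pr \o (fun n => [set x | eps <= cn n x - Cstar])) @ \oo -->
      Pr (\bigcap_n [set x | eps <= cn n x - Cstar]).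
    apply: nonincreasing_cvg_mu.
    - by rewrite -ge0_fin_numE ?measure_ge0 ?fin_num_measure.
    - exact: mS.
    - by apply: bigcap_measurableType => i _.
    - exact: Sdec.
  by rewrite cap_null in cv.
pose N := \bigcup_k \bigcap_n [set x | (k.+1%:R)^-1 <= cn n x - Cstar].
apply: (@negligibleS _ _ _ _ N).
  move=> x /= Hx; apply: contrapT => HN; apply: Hx.
  apply/cvgrPdist_lt => e e0.
  pose k := Num.trunc (e^-1).
  have ke : (k.+1%:R)^-1 < e.
    rewrite invf_plt ?posrE //.
    exact: truncnS_gt.
  have [n0 Hn0] : exists n0, cn n0 x - Cstar < (k.+1%:R)^-1.
    apply: contrapT => H.
    suff NX : N x by exact: HN NX.
    exists k => // n _ /=.
    by rewrite leNgt; apply/negP => h; apply: H; exists n.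
  near=> n.
  have n0n : (n0 <= n)%N by near: n; exact: nbhs_infty_ge.
  rewrite distrC ger0_norm; last by rewrite subr_ge0 cn_ge.
  apply: (le_lt_trans _ (lt_trans Hn0 ke)).
  by rewrite lerD2r; apply: cn_dec.
apply: negligible_bigcup => k.
apply/negligibleP.
  by apply: bigcap_measurableType => i _.
apply: cap_null.
by rewrite invr_gt0 ltr0Sn.
Unshelve. all: by end_near.
Qed.

End proof.

Theorem theorem3 (R : realType) (X : normedModType R) (U : Type)
  (P : planning_problem X U) (Cstar : R)
  (d : measure_display) (Sd : measurableType d) (mu : probability Sd R)
  (A : \bar R -> Sd -> traj X U) (w : R)
  (dO : measure_display) (Omega : measurableType dO) (Pr : probability Omega R)
  (omega : nat -> Omega -> Sd) :
  optimal_cost_attained P Cstar ->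
  well_behaved P Cstar mu A w ->
  measurable_fun setT (fun p : \bar R * Sd => cost P (A p.1 p.2)) ->
  iid_seeds Pr mu omega ->
  (forall eps : R, 0 < eps ->
     (fun n => Pr [set x | eps <= cost P (asymp_opt P A omega n x) - Cstar])
       @ \oo --> 0%E) /\
  {ae Pr, forall x, (fun n => cost P (asymp_opt P A omega n x)) @ \oo --> Cstar}.
Proof. exact: (@main R X U P Cstar d Sd mu A w dO Omega Pr omega). Qed.
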